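(* Let $m,n$ be positive integers and let $X$ have Snedecor's $F$-distribution with $m$ and $n$ degrees of freedom, i.e. density $f(x)=\frac{\Gamma(\frac{n+m}2)(\frac mn)^{m/2}x^{(m-2)/2}}{\Gamma(\frac m2)\Gamma(\frac n2)(1+\frac mnx)^{(n+m)/2}}$ for $0<x<\infty$. Then $$\Pr\{X\ge x\}\le x^{m/2}\Big(\frac{n+m}{n+mx}\Big)^{(m+n)/2}\quad\text{for } x\ge1,\qquad \Pr\{X\le x\}\le x^{m/2}\Big(\frac{n+m}{n+mx}\Big)^{(m+n)/2}\quad\text{for } 0<x\le1,$$ and the function $x\mapsto x^{m/2}\big(\frac{n+m}{n+mx}\big)^{(m+n)/2}$ is monotonically increasing on $(0,1)$ and monotonically decreasing on $(1,\infty)$. *)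

(* Defs.v *)
From Stdlib Require Import Reals.
From Coquelicot Require Import Coquelicot.
Open Scope R_scope.

Definition Gamma (s : R) : R :=
  RInt_gen (fun t => Rpower t (s - 1) * exp (- t)) (at_right 0) (Rbar_locally p_infty).

Definition F_density (m n : nat) (x : R) : R :=
  Gamma ((INR n + INR m) / 2) * Rpower (INR m / INR n) (INR m / 2)
    * Rpower x ((INR m - 2) / 2)
  / (Gamma (INR m / 2) * Gamma (INR n / 2)
     * Rpower (1 + INR m / INR n * x) ((INR n + INR m) / 2)).

Definition F_upper_tail (m n : nat) (x : R) : R :=
  RInt_gen (F_density m n) (at_point x) (Rbar_locally p_infty).

Definition F_cdf (m n : nat) (x : R) : R :=
  RInt_gen (F_density m n) (at_right 0) (at_point x).

Definition F_bound (m n : nat) (x : R) : R :=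
  Rpower x (INR m / 2)
  * Rpower ((INR n + INR m) / (INR n + INR m * x)) ((INR m + INR n) / 2).

(* Main.v *)
Require Import Defs.
From Stdlib Require Import Reals Lra.
From Coquelicot Require Import Coquelicot.
Open Scope R_scope.
Lemma exRc (f : R -> R) a b : (forall z, Rmin a b <= z <= Rmax a b -> continuous f z) -> ex_RInt f a b.
Proof. intros H. apply (ex_RInt_continuous (V:=R_CompleteNormedModule)). exact H. Qed.
Lemma contD (f : R -> R) x : ex_derive f x -> continuous f x.
Proof. apply (ex_derive_continuous (K:=R_AbsRing) (V:=R_NormedModule)). Qed.

Lemma Rpower_pos x y : 0 < Rpower x y.
Proof. apply exp_pos. Qed.

Lemma squeeze0 {T} (F : (T -> Prop) -> Prop) {FF : Filter F} (f g : T -> R) :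
  F (fun t => Rabs (f t) <= g t) -> filterlim g F (locally 0) -> filterlim f F (locally 0).
Proof.
  intros Hb Hg. apply (filterlim_locally (U:=R_UniformSpace)). intros eps.
  apply (filterlim_locally (U:=R_UniformSpace)) with (eps := eps) in Hg.
  generalize (filter_and _ _ Hb Hg). apply filter_imp. intros t [H1 H2].
  change (Rabs (f t - 0) < eps). change (Rabs (g t - 0) < eps) in H2.
  rewrite Rminus_0_r in *. apply Rle_lt_trans with (g t); auto.
  apply Rle_lt_trans with (Rabs (g t)); [apply Rle_abs|auto].
Qed.

Lemma at_right_pos : at_right 0 (fun a => 0 < a).
Proof. exists (mkposreal 1 Rlt_0_1). intros; auto. Qed.
Lemma pinf_pos : Rbar_locally p_infty (fun b => 0 < b).
Proof. exists 0. intros; auto. Qed.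

Lemma Rpow_lim0 s : 0 < s -> filterlim (fun t => Rpower t s) (at_right 0) (locally 0).
Proof.
  intros Hs. apply (filterlim_locally (U:=R_UniformSpace)). intros eps.
  assert (Hd : 0 < exp (ln eps / s)) by apply exp_pos.
  exists (mkposreal _ Hd). intros y Hy Hy0. simpl in Hy.
  change (Rabs (y - 0) < exp (ln eps / s)) in Hy.
  change (Rabs (Rpower y s - 0) < eps). rewrite Rminus_0_r in *.
  rewrite Rabs_pos_eq in Hy by lra. rewrite Rabs_pos_eq by (left; apply Rpower_pos).
  unfold Rpower. rewrite <- (exp_ln eps) by apply cond_pos. apply exp_increasing.
  apply ln_increasing in Hy; auto. rewrite ln_exp in Hy.
  apply Rmult_lt_compat_l with (r := s) in Hy; auto.
  replace (s * (ln eps / s)) with (ln eps) in Hy by (field; lra). lra.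
Qed.

Lemma Rpow_liminf s : 0 < s -> filterlim (fun t => Rpower t (- s)) (Rbar_locally p_infty) (locally 0).
Proof.
  intros Hs. apply (filterlim_locally (U:=R_UniformSpace)). intros eps.
  exists (exp (- ln eps / s)). intros y Hy.
  assert (Hy0 : 0 < y) by (assert (H := exp_pos (- ln eps / s)); lra).
  change (Rabs (Rpower y (- s) - 0) < eps). rewrite Rminus_0_r.
  rewrite Rabs_pos_eq by (left; apply Rpower_pos).
  unfold Rpower. rewrite <- (exp_ln eps) by apply cond_pos. apply exp_increasing.
  apply ln_increasing in Hy; [|apply exp_pos]. rewrite ln_exp in Hy.
  apply Rmult_lt_compat_l with (r := s) in Hy; auto.
  replace (s * (- ln eps / s)) with (- ln eps) in Hy by (field; lra). lra.
Qed.

Lemma exp_ge_pow (t : R) (N : nat) : 0 <= t -> t ^ N / INR (Factorial.fact N) <= exp t.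
Proof.
  intros Ht. eapply Rle_trans; [|apply (exp_ge_taylor t N Ht)].
  destruct N. simpl. lra.
  simpl sum_f_R0. rewrite <- (Rplus_0_l (t ^ S N / INR (Factorial.fact (S N)))) at 1.
  apply Rplus_le_compat_r. apply cond_pos_sum. intros k.
  apply Rmult_le_pos. apply pow_le; auto. left; apply Rinv_0_lt_compat, INR_fact_lt_0.
Qed.

Lemma Rpow_exp_liminf s : filterlim (fun t => Rpower t s * exp (- t)) (Rbar_locally p_infty) (locally 0).
Proof.
  destruct (INR_unbounded s) as [K HK].
  apply squeeze0 with (fun t => INR (Factorial.fact (S K)) * Rpower t (Ropp 1)).
  - typeclasses eauto.
  - exists 1. intros t Ht.
    rewrite Rabs_pos_eq by (apply Rmult_le_pos; left; [apply Rpower_pos|apply exp_pos]).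
    assert (H1 : Rpower t s <= t ^ K).
    { rewrite <- Rpower_pow by lra. apply Rle_Rpower; lra. }
    assert (H2 := exp_ge_pow t (S K) ltac:(lra)).
    assert (Hf := INR_fact_lt_0 (S K)).
    rewrite exp_Ropp. rewrite Rpower_Ropp, Rpower_1 by lra.
    assert (HtK : 0 < t ^ K) by (apply pow_lt; lra).
    assert (He : 0 < exp t) by apply exp_pos.
    apply Rle_trans with (t ^ K * / exp t).
    apply Rmult_le_compat_r; [left; apply Rinv_0_lt_compat; auto| auto].
    simpl pow in H2.
    apply Rmult_le_reg_r with (exp t * t); [nra|].
    replace (t ^ K * / exp t * (exp t * t)) with (t * t ^ K) by (field; lra).
    replace (INR (Factorial.fact (S K)) * / t * (exp t * t)) with (INR (Factorial.fact (S K)) * exp t) by (field; lra).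
    apply Rmult_le_reg_r with (/ INR (Factorial.fact (S K))). apply Rinv_0_lt_compat; auto.
    replace (INR (Factorial.fact (S K)) * exp t * / INR (Factorial.fact (S K))) with (exp t) by (field; lra).
    exact H2.
  - replace 0 with (INR (Factorial.fact (S K)) * 0) by ring.
    apply (filterlim_comp _ _ _ (fun t => Rpower t (Ropp 1)) (fun u => INR (Factorial.fact (S K)) * u) _ (locally 0)).
    apply Rpow_liminf; lra.
    apply contD. auto_derive. auto.
Qed.

Lemma antideriv_gen (Fa Fb : (R -> Prop) -> Prop) {FFa : Filter Fa} {FFb : Filter Fb}
  (F g : R -> R) (la lb : R) :
  Fa (fun a => 0 < a) -> Fb (fun b => 0 < b) ->
  (forall x, 0 < x -> is_derive F x (g x)) ->
  (forall x, 0 < x -> continuous g x) ->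
  filterlim F Fa (locally la) -> filterlim F Fb (locally lb) ->
  is_RInt_gen g Fa Fb (lb - la).
Proof.
  intros Ha Hb Hd Hc Hla Hlb.
  assert (HD : forall x, 0 < x -> Derive F x = g x).
  { intros x Hx. apply is_derive_unique. now apply Hd. }
  apply is_RInt_gen_ext with (Derive F).
  { apply Filter_prod with (fun a => 0 < a) (fun b => 0 < b); auto.
    intros a b Ha' Hb' x Hx. apply HD. simpl in Hx.
    destruct Hx as [Hx _]. eapply Rle_lt_trans; [|exact Hx].
    apply Rmin_glb; lra. }
  apply is_RInt_gen_Derive; auto.
  - apply Filter_prod with (fun a => 0 < a) (fun b => 0 < b); auto.
    intros a b Ha' Hb' x Hx. simpl in Hx. exists (g x). apply Hd.
    destruct Hx as [Hx _]. eapply Rlt_le_trans; [|exact Hx].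
    apply Rmin_glb_lt; lra.
  - apply Filter_prod with (fun a => 0 < a) (fun b => 0 < b); auto.
    intros a b Ha' Hb' x Hx. simpl in Hx.
    assert (Hx0 : 0 < x).
    { destruct Hx as [Hx _]. eapply Rlt_le_trans; [|exact Hx].
      apply Rmin_glb_lt; lra. }
    apply continuous_ext_loc with g.
    + assert (Hp : 0 < x / 2) by lra.
      exists (mkposreal _ Hp). intros y Hy. symmetry. apply HD.
      unfold ball in Hy; simpl in Hy; unfold AbsRing_ball, abs, minus, plus, opp in Hy; simpl in Hy.
      apply Rabs_lt_between' in Hy. lra.
    + now apply Hc.
Qed.

Definition gi (s t : R) := Rpower t (s - 1) * exp (- t).

Lemma gi_cont s t : 0 < t -> continuous (gi s) t.
Proof. intros Ht. apply contD. unfold gi, Rpower. auto_derive. lra. Qed.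

Lemma is_RInt_gen_val {Fa Fb} (f : R -> R) (l l' : R) :
  is_RInt_gen f Fa Fb l -> l = l' -> is_RInt_gen f Fa Fb l'.
Proof. intros H ->. exact H. Qed.

Lemma Gamma_rec s l : 0 < s -> is_RInt_gen (gi s) (at_right 0) (Rbar_locally p_infty) l ->
  is_RInt_gen (gi (s + 1)) (at_right 0) (Rbar_locally p_infty) (s * l).
Proof.
  intros Hs Hl.
  assert (H1 : is_RInt_gen (fun t => gi (s+1) t - s * gi s t) (at_right 0) (Rbar_locally p_infty) (0 - 0)).
  { apply (antideriv_gen _ _ (fun t => - (Rpower t s * exp (- t)))).
    - apply at_right_pos.
    - apply pinf_pos.
    - intros t Ht. unfold gi, Rpower. auto_derive. lra.
      replace (s + 1 - 1) with s by ring.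
      replace ((s - 1) * ln t) with (s * ln t + - ln t) by ring.
      rewrite exp_plus, (exp_Ropp (ln t)). rewrite exp_ln by lra. field. lra.
    - intros t Ht. apply contD. unfold gi, Rpower. auto_derive. lra.
    - apply (squeeze0 _ _ (fun t => Rpower t s)).
      + exists (mkposreal 1 Rlt_0_1). intros t _ Ht.
        rewrite Rabs_Ropp, Rabs_pos_eq by (apply Rmult_le_pos; left; [apply Rpower_pos|apply exp_pos]).
        rewrite <- Rmult_1_r. apply Rmult_le_compat_l. left; apply Rpower_pos.
        rewrite <- exp_0. left. apply exp_increasing. lra.
      + apply Rpow_lim0; auto.
    - apply (squeeze0 _ _ (fun t => Rpower t s * exp (- t))).
      + apply filter_forall. intros t. rewrite Rabs_Ropp. right.
        apply Rabs_pos_eq. apply Rmult_le_pos; left; [apply Rpower_pos|apply exp_pos].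
      + apply Rpow_exp_liminf. }
  assert (H2 := is_RInt_gen_plus _ _ _ _ H1 (is_RInt_gen_scal _ s _ Hl)).
  apply (is_RInt_gen_val _ (plus (0 - 0) (scal s l))).
  eapply is_RInt_gen_ext; [ | exact H2]. apply filter_forall. intros ab x _.
  unfold plus, scal; simpl; unfold mult; simpl. ring.
  unfold plus, scal; simpl; unfold mult; simpl. ring.
Qed.

Definition gau (u : R) := exp (- (u * u)).
Definition Eg (x : R) := RInt gau 0 x.
Definition Gk (x t : R) := exp (- (x * x) * (1 + t * t)) / (1 + t * t).
Definition Gf (x : R) := RInt (Gk x) 0 1.

Lemma gau_cont x : continuous gau x.
Proof. apply contD. unfold gau. auto_derive. auto. Qed.

Lemma gau_ex a b : ex_RInt gau a b.
Proof. apply exRc. intros; apply gau_cont. Qed.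

Lemma Eg_derive x : is_derive Eg x (gau x).
Proof. apply is_derive_RInt with 0. apply filter_forall. intros y. apply RInt_correct, gau_ex.
  apply gau_cont. Qed.

Lemma Gk_cont x t : continuous (Gk x) t.
Proof. apply contD. unfold Gk. auto_derive. nra. Qed.

Lemma Gk_deriv x t : Derive (fun u => Gk u t) x = -2 * x * exp (- (x * x) * (1 + t * t)).
Proof. apply is_derive_unique. unfold Gk. auto_derive. nra. field. nra. Qed.
Lemma Gf_derive (x : R) : is_derive Gf x (-2 * gau x * Eg x).
Proof.
  assert (Hd : is_derive Gf x (RInt (fun t => Derive (fun u => Gk u t) x) 0 1)).
  { unfold Gf. apply (is_derive_RInt_param Gk).
  - apply filter_forall. intros y t _. unfold Gk. auto_derive. nra.
  - intros t _. apply continuity_2d_pt_ext with (fun u v => -2 * u * exp (- (u * u) * (1 + v * v))).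
    intros; symmetry; apply Gk_deriv.
    apply continuity_2d_pt_mult. apply continuity_2d_pt_mult. apply continuity_2d_pt_const.
    apply continuity_2d_pt_id1.
    apply continuity_1d_2d_pt_comp with (f := exp). apply derivable_continuous_pt, derivable_pt_exp.
    apply continuity_2d_pt_mult. apply continuity_2d_pt_opp. apply continuity_2d_pt_mult; apply continuity_2d_pt_id1.
    apply continuity_2d_pt_plus. apply continuity_2d_pt_const.
    apply continuity_2d_pt_mult; apply continuity_2d_pt_id2.
  - apply filter_forall. intros y. apply exRc. intros; apply Gk_cont. }
  replace (-2 * gau x * Eg x) with (RInt (fun t => Derive (fun u => Gk u t) x) 0 1). exact Hd.
  rewrite (RInt_ext _ (fun t => scal (-2 * gau x) (scal x (gau (x * t + 0))))).
    2:{ intros t _. rewrite Gk_deriv. unfold gau, scal; simpl; unfold mult; simpl.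
        replace (- (x*x) * (1 + t*t)) with (- (x*x) + - ((x*t+0) * (x*t+0))) by ring.
        rewrite exp_plus. ring. }
    rewrite (RInt_scal (V:=R_CompleteNormedModule) (fun t => scal x (gau (x * t + 0)))). rewrite (RInt_comp_lin (V:=R_CompleteNormedModule) gau). unfold Eg. replace (x*0+0) with 0 by ring.
    replace (x*1+0) with x by ring. reflexivity.
    apply gau_ex.
    apply exRc. intros. apply contD. unfold gau, scal; simpl; unfold mult; simpl. auto_derive. auto.
Qed.

Lemma Gf0 : Gf 0 = PI / 4.
Proof.
  unfold Gf. rewrite <- atan_1. rewrite (RInt_ext _ (fun t => / (1 + t ^ 2))).
  2:{ intros t _. change (Gk 0 t = / (1 + t^2)). unfold Gk. replace (- (0*0) * (1+t*t)) with 0 by ring. rewrite exp_0. field. nra. }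
  rewrite (is_RInt_unique _ 0 1 (atan 1 - atan 0)). rewrite atan_0. unfold minus, plus, opp; simpl. ring.
  apply (is_RInt_derive (V:=R_CompleteNormedModule) atan).
  intros x _. apply is_derive_Reals. apply derivable_pt_lim_atan.
  intros x _. apply contD. auto_derive. nra.
Qed.

Lemma EG_const (x : R) : 0 <= x -> Eg x ^ 2 + Gf x = PI / 4.
Proof.
  intros Hx.
  replace (PI/4) with (Eg 0 ^ 2 + Gf 0). 2:{ unfold Eg. rewrite RInt_point, Gf0. unfold zero; simpl. ring. }
  destruct (Req_dec x 0) as [->|Hx0]. reflexivity.
  symmetry. apply (eq_is_derive (V:=R_NormedModule) (fun x => Eg x ^ 2 + Gf x) 0 x).
  2: lra. intros t _.
  assert (H := Gf_derive t). assert (H2 := Eg_derive t).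
  assert (Hz : (2 * Eg t * gau t + (-2 * gau t * Eg t)) = 0) by ring.
  change (@zero R_NormedModule) with 0. rewrite <- Hz.
  apply (is_derive_plus (fun x => Eg x ^ 2) Gf). 2: exact H.
  apply (is_derive_ext (fun x => Eg x * Eg x)). intros; simpl; ring.
  replace (2 * Eg t * gau t) with (gau t * Eg t + Eg t * gau t) by ring.
  apply (is_derive_mult Eg Eg); auto. intros; apply Rmult_comm.
Qed.

Lemma gau_pos x : 0 < gau x.
Proof. apply exp_pos. Qed.

Lemma Eg_nonneg x : 0 <= x -> 0 <= Eg x.
Proof. intros Hx. apply RInt_ge_0; auto. apply gau_ex. intros; left; apply gau_pos. Qed.

Lemma Gf_bounds x : 0 <= Gf x <= gau x.
Proof.
  assert (Hk : forall t, 0 <= t -> 0 < Gk x t <= gau x).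
  { intros t Ht. unfold Gk, gau. split.
    apply Rdiv_lt_0_compat. apply exp_pos. nra.
    assert (H1 : exp (- (x * x) * (1 + t * t)) <= exp (- (x * x))).
    { destruct (Req_dec (x*x*(t*t)) 0) as [E|E].
      - right. f_equal. replace (- (x*x)*(1+t*t)) with (- (x*x) - x*x*(t*t)) by ring. rewrite E. ring.
      - left. apply exp_increasing. assert (0 <= x*x*(t*t)) by (apply Rmult_le_pos; nra). nra. }
    unfold Rdiv. apply Rle_trans with (exp (- (x * x) * (1 + t * t)) * 1).
    apply Rmult_le_compat_l. left; apply exp_pos.
    rewrite <- Rinv_1. apply Rinv_le_contravar. lra. nra. lra. }
  unfold Gf. split.
  apply RInt_ge_0. lra. apply exRc; intros; apply Gk_cont. intros t Ht. left; apply Hk; lra.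
  apply Rle_trans with (RInt (fun _ => gau x) 0 1).
  apply RInt_le. lra. apply exRc; intros; apply Gk_cont. apply exRc; intros; apply continuous_const.
  intros t Ht. apply Hk; lra.
  rewrite RInt_const. unfold scal; simpl; unfold mult; simpl. lra.
Qed.

Lemma gau_bound x : 0 < x -> gau x < / x.
Proof.
  intros Hx. unfold gau. rewrite exp_Ropp. apply Rinv_lt_contravar. apply Rmult_lt_0_compat; [lra|apply exp_pos].
  assert (H := exp_ineq1_le (x*x)). nra.
Qed.

Lemma Gf_lim : filterlim Gf (Rbar_locally p_infty) (locally 0).
Proof.
  apply (filterlim_locally (U:=R_UniformSpace)). intros eps.
  exists (/ eps). intros x Hx.
  assert (He : 0 < / eps) by (apply Rinv_0_lt_compat, cond_pos).
  assert (Hx0 : 0 < x) by lra.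
  change (Rabs (Gf x - 0) < eps). rewrite Rminus_0_r.
  destruct (Gf_bounds x) as [H1 H2]. rewrite Rabs_pos_eq by lra.
  assert (H3 := gau_bound x Hx0).
  assert (/ x < eps). { rewrite <- (Rinv_inv eps). apply Rinv_lt_contravar. nra. exact Hx. }
  lra.
Qed.

Lemma Eg_eq x : 0 <= x -> Eg x = sqrt (PI / 4 - Gf x).
Proof.
  intros Hx. rewrite <- (EG_const x Hx). replace (Eg x ^ 2 + Gf x - Gf x) with (Rsqr (Eg x)) by (unfold Rsqr; ring).
  rewrite sqrt_Rsqr. reflexivity. apply Eg_nonneg; auto.
Qed.

Lemma Eg_lim : filterlim Eg (Rbar_locally p_infty) (locally (sqrt (PI / 4))).
Proof.
  apply (filterlim_ext_loc (fun x => sqrt (PI / 4 - Gf x))).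
  exists 0. intros x Hx. symmetry. apply Eg_eq. lra.
  apply (filterlim_comp _ _ _ Gf (fun g => sqrt (PI / 4 - g)) _ (locally 0)). apply Gf_lim.
  assert (Hc : continuous (fun g => sqrt (PI / 4 - g)) 0).
  { apply contD. auto_derive. assert (H := PI_RGT_0). lra. }
  unfold continuous in Hc. rewrite Rminus_0_r in Hc. exact Hc.
Qed.

Lemma cont_at_right (f : R -> R) x : continuous f x -> filterlim f (at_right x) (locally (f x)).
Proof.
  intros Hc P HP. specialize (Hc P HP). destruct Hc as [d Hd]. exists d. intros y Hy _. apply Hd. exact Hy.
Qed.

Lemma Gamma1_int : is_RInt_gen (gi 1) (at_right 0) (Rbar_locally p_infty) 1.
Proof.
  apply (is_RInt_gen_val _ (0 - -1)); [|ring].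
  apply (antideriv_gen _ _ (fun t => - exp (- t))).
  - apply at_right_pos.
  - apply pinf_pos.
  - intros t Ht. unfold gi. replace (1 - 1) with 0 by ring. rewrite Rpower_O by lra.
    auto_derive; auto. ring.
  - intros; apply gi_cont; auto.
  - replace (-1) with (- exp (- 0)) by (rewrite Ropp_0, exp_0; ring).
    apply (cont_at_right (fun t => - exp (- t))). apply contD. auto_derive. auto.
  - apply (squeeze0 _ _ (fun t => Rpower t 0 * exp (- t))).
    + exists 0. intros t Ht. rewrite Rpower_O by lra. rewrite Rabs_Ropp, Rabs_pos_eq. lra.
      left; apply exp_pos.
    + apply Rpow_exp_liminf.
Qed.

Lemma sqrt_deriv t : 0 < t -> is_derive sqrt t (/ (2 * sqrt t)).
Proof. intros Ht. auto_derive. auto. field. apply Rgt_not_eq, sqrt_lt_R0; auto. Qed.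

Lemma Gamma_half_int : is_RInt_gen (gi (/ 2)) (at_right 0) (Rbar_locally p_infty) (2 * sqrt (PI / 4)).
Proof.
  apply (is_RInt_gen_val _ (2 * sqrt (PI / 4) - 2 * Eg (sqrt 0))).
  2:{ rewrite sqrt_0. unfold Eg. rewrite RInt_point. unfold zero; simpl. ring. }
  apply (antideriv_gen _ _ (fun t => 2 * Eg (sqrt t))).
  - apply at_right_pos.
  - apply pinf_pos.
  - intros t Ht.
    assert (Hs := sqrt_lt_R0 t Ht).
    assert (H := is_derive_comp Eg sqrt t _ _ (Eg_derive (sqrt t)) (sqrt_deriv t Ht)).
    apply (is_derive_scal _ _ 2 _) in H. 
    replace (gi (/ 2) t) with (scal 2 (scal (/ (2 * sqrt t)) (gau (sqrt t)))). exact H.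
    unfold gi, gau, scal; simpl; unfold mult; simpl.
    rewrite sqrt_sqrt by lra. replace (/ 2 - 1) with (- / 2) by field.
    rewrite Rpower_Ropp, Rpower_sqrt by auto. field. lra.
  - intros; apply gi_cont; auto.
  - apply (cont_at_right (fun t => 2 * Eg (sqrt t))).
    apply (continuous_comp sqrt (fun u => 2 * Eg u)).
    apply continuity_pt_filterlim, continuity_pt_sqrt. lra.
    apply contD. apply ex_derive_scal. eexists. apply Eg_derive.
  - apply (filterlim_comp _ _ _ sqrt (fun u => 2 * Eg u) _ (Rbar_locally p_infty)).
    apply filterlim_sqrt_p.
    apply (filterlim_comp _ _ _ Eg (fun u => 2 * u) _ (locally (sqrt (PI / 4)))).
    apply Eg_lim. apply contD. auto_derive. auto.
Qed.

Lemma Gamma_is (s g : R) : is_RInt_gen (gi s) (at_right 0) (Rbar_locally p_infty) g -> Gamma s = g.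
Proof. intros H. unfold Gamma. change (RInt_gen (gi s) (at_right 0) (Rbar_locally p_infty) = g).
  apply is_RInt_gen_unique. exact H. Qed.

Lemma Gamma_one : Gamma 1 = 1.
Proof. apply Gamma_is, Gamma1_int. Qed.

Lemma Gamma_half : Gamma (/ 2) = 2 * sqrt (PI / 4).
Proof. apply Gamma_is, Gamma_half_int. Qed.

Lemma Gamma_half_sq : Gamma (/ 2) * Gamma (/ 2) = PI.
Proof. rewrite Gamma_half. replace (2 * sqrt (PI / 4) * (2 * sqrt (PI / 4))) with (4 * (sqrt (PI/4) * sqrt (PI/4))) by ring.
  rewrite sqrt_sqrt. field. assert (H := PI_RGT_0). lra. Qed.

Definition hs (k : nat) := INR (S k) / 2.

Lemma hs_pos k : 0 < hs k.
Proof. unfold hs. assert (H := lt_0_INR (S k) (Nat.lt_0_succ k)). lra. Qed.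

Lemma hs_SS k : hs (S (S k)) = hs k + 1.
Proof. unfold hs. rewrite !S_INR. field. Qed.

Lemma Gam_all k : is_RInt_gen (gi (hs k)) (at_right 0) (Rbar_locally p_infty) (Gamma (hs k)) /\ 0 < Gamma (hs k).
Proof.
  assert (H : forall k, (exists g, is_RInt_gen (gi (hs k)) (at_right 0) (Rbar_locally p_infty) g /\ 0 < g) /\
                        (exists g, is_RInt_gen (gi (hs (S k))) (at_right 0) (Rbar_locally p_infty) g /\ 0 < g)).
  { clear k; intros k; induction k as [|k [IH1 IH2]].
    - split.
      + exists (2 * sqrt (PI / 4)). replace (hs 0) with (/ 2) by (unfold hs; simpl; field).
        split. apply Gamma_half_int. apply Rmult_lt_0_compat. lra. apply sqrt_lt_R0.
        assert (H := PI_RGT_0). lra.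
      + exists 1. replace (hs 1) with 1 by (unfold hs; simpl; field). split. apply Gamma1_int. lra.
    - split; auto. destruct IH1 as [g [Hg Hg0]]. exists (hs k * g). rewrite hs_SS. split.
      apply Gamma_rec; auto. apply hs_pos. apply Rmult_lt_0_compat; auto. apply hs_pos. }
  destruct (H k) as [[g [Hg Hg0]] _]. rewrite (Gamma_is _ _ Hg). auto.
Qed.

Lemma Gamma_rec_hs k : Gamma (hs k + 1) = hs k * Gamma (hs k).
Proof. apply Gamma_is. apply Gamma_rec. apply hs_pos. apply Gam_all. Qed.

Ltac sidec := repeat split; try (apply Rgt_not_eq, exp_pos); try (apply Rgt_not_eq; nra); try (apply Rgt_not_eq; repeat apply Rmult_lt_0_compat; nra); try lra; try nra.

Definition kab (r a b x : R) := Rpower x (a - 1) / Rpower (1 + r * x) (a + b).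

Lemma exp_le_mono x y : x <= y -> exp x <= exp y.
Proof. intros [H|H]. left; apply exp_increasing; auto. subst; lra. Qed.

Lemma ext_pos (Fa Fb : (R -> Prop) -> Prop) {FFa : Filter Fa} {FFb : Filter Fb} (f g : R -> R) l :
  Fa (fun a => 0 < a) -> Fb (fun b => 0 < b) ->
  (forall x, 0 < x -> f x = g x) -> is_RInt_gen f Fa Fb l -> is_RInt_gen g Fa Fb l.
Proof.
  intros Ha Hb He H. eapply is_RInt_gen_ext; [|exact H].
  apply Filter_prod with (fun a => 0 < a) (fun b => 0 < b); auto.
  intros a b Ha' Hb' x Hx. apply He. simpl in Hx.
  destruct Hx as [Hx _]. eapply Rle_lt_trans; [|exact Hx]. apply Rmin_glb; lra.
Qed.

Lemma Rpower_ge1 y c : 1 <= y -> 0 <= c -> 1 <= Rpower y c.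
Proof. intros Hy Hc. unfold Rpower. rewrite <- exp_0. apply exp_le_mono.
  apply Rmult_le_pos; auto. rewrite <- ln_1. apply ln_le; lra. Qed.

Lemma frac_lim0 r a c : 0 < r -> 0 < a -> 0 <= c ->
  filterlim (fun x => Rpower x a / Rpower (1 + r * x) c) (at_right 0) (locally 0).
Proof.
  intros Hr Ha Hc. apply (squeeze0 _ _ (fun x => Rpower x a)).
  - exists (mkposreal 1 Rlt_0_1). intros x _ Hx.
    assert (H1 := Rpower_ge1 (1 + r * x) c ltac:(nra) Hc).
    assert (H2 := Rpower_pos x a).
    rewrite Rabs_pos_eq. unfold Rdiv. rewrite <- (Rmult_1_r (Rpower x a)) at 2.
    apply Rmult_le_compat_l. lra.
    assert (H3 := Rinv_le_contravar 1 _ Rlt_0_1 H1). rewrite Rinv_1 in H3. exact H3.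
    unfold Rdiv. apply Rmult_le_pos. lra. left; apply Rinv_0_lt_compat; lra.
  - apply Rpow_lim0; auto.
Qed.

Lemma frac_liminf r a c : 0 < r -> 0 <= c -> a < c ->
  filterlim (fun x => Rpower x a / Rpower (1 + r * x) c) (Rbar_locally p_infty) (locally 0).
Proof.
  intros Hr Hc Hac. apply (squeeze0 _ _ (fun x => Rpower r (- c) * Rpower x (- (c - a)))).
  - exists 0. intros x Hx.
    rewrite Rabs_pos_eq. 2:{ unfold Rdiv. apply Rmult_le_pos. left; apply Rpower_pos. left; apply Rinv_0_lt_compat, Rpower_pos. }
    unfold Rdiv, Rpower. rewrite <- exp_Ropp, <- exp_plus, <- exp_plus. apply exp_le_mono.
    assert (ln (r * x) <= ln (1 + r * x)) by (apply ln_le; nra).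
    rewrite ln_mult in H by lra. nra.
  - replace 0 with (Rpower r (- c) * 0) by ring.
    apply (filterlim_comp _ _ _ (fun x => Rpower x (- (c - a))) (fun u => Rpower r (- c) * u) _ (locally 0)).
    apply Rpow_liminf; lra.
    apply contD. auto_derive. auto.
Qed.

Lemma J_rec1 r a b l : 0 < r -> 0 < a -> 0 < b ->
  is_RInt_gen (kab r a b) (at_right 0) (Rbar_locally p_infty) l ->
  is_RInt_gen (kab r (a + 1) b) (at_right 0) (Rbar_locally p_infty) (a / ((a + b) * r) * l).
Proof.
  intros Hr Ha Hb Hl.
  assert (H1 : is_RInt_gen (fun x => a * kab r a b x - (a + b) * r * kab r (a + 1) b x)
                 (at_right 0) (Rbar_locally p_infty) (0 - 0)).
  { apply (antideriv_gen _ _ (fun x => Rpower x a / Rpower (1 + r * x) (a + b))).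
    - apply at_right_pos.
    - apply pinf_pos.
    - intros x Hx. unfold kab, Rpower. auto_derive. sidec.
      replace ((a - 1) * ln x) with (a * ln x + - ln x) by ring.
      replace ((a + 1 + b) * ln (1 + r * x)) with ((a + b) * ln (1 + r * x) + ln (1 + r * x)) by ring.
      replace (a + 1 - 1) with a by ring.
      rewrite !exp_plus, (exp_Ropp (ln x)), !exp_ln by nra.
      assert (0 < exp (a * ln x)) by apply exp_pos.
      assert (0 < exp ((a + b) * ln (1 + r * x))) by apply exp_pos.
      field. nra.
    - intros x Hx. apply contD. unfold kab, Rpower. auto_derive. sidec.
    - apply frac_lim0; lra.
    - apply frac_liminf; lra. }
  assert (H2 := is_RInt_gen_minus _ _ _ _ (is_RInt_gen_scal _ a _ Hl) H1).
  assert (H3 := is_RInt_gen_scal _ (/ ((a + b) * r)) _ H2).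
  apply (is_RInt_gen_val _ (scal (/ ((a + b) * r)) (minus (scal a l) (0 - 0)))).
  eapply is_RInt_gen_ext; [ | exact H3]. apply filter_forall. intros ab x _.
  unfold minus, plus, opp, scal; simpl; unfold mult; simpl. field. nra.
  unfold minus, plus, opp, scal; simpl; unfold mult; simpl. field. nra.
Qed.

Lemma kab_split r a b x : 0 < x -> 0 < r ->
  kab r a (b + 1) x = kab r a b x - r * kab r (a + 1) b x.
Proof.
  intros Hx Hr. unfold kab, Rpower.
  replace ((a - 1) * ln x) with (a * ln x + - ln x) by ring.
  replace (a + 1 - 1) with a by ring.
  replace ((a + (b + 1)) * ln (1 + r * x)) with ((a + b) * ln (1 + r * x) + ln (1 + r * x)) by ring.
  replace ((a + 1 + b) * ln (1 + r * x)) with ((a + b) * ln (1 + r * x) + ln (1 + r * x)) by ring.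
  rewrite !exp_plus, (exp_Ropp (ln x)), !exp_ln by nra.
  assert (0 < exp (a * ln x)) by apply exp_pos.
  assert (0 < exp ((a + b) * ln (1 + r * x))) by apply exp_pos.
  field. split; nra.
Qed.

Lemma J_rec2 r a b l l' : 0 < r ->
  is_RInt_gen (kab r a b) (at_right 0) (Rbar_locally p_infty) l ->
  is_RInt_gen (kab r (a + 1) b) (at_right 0) (Rbar_locally p_infty) l' ->
  is_RInt_gen (kab r a (b + 1)) (at_right 0) (Rbar_locally p_infty) (l - r * l').
Proof.
  intros Hr Hl Hl'.
  assert (H := is_RInt_gen_minus _ _ _ _ Hl (is_RInt_gen_scal _ r _ Hl')).
  apply (ext_pos _ _ (fun x => minus (kab r a b x) (scal r (kab r (a + 1) b x))) _ _ at_right_pos pinf_pos).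
  intros x Hx. rewrite kab_split by auto. reflexivity. exact H.
Qed.

Lemma lim_scal0 {T} (F : (T -> Prop) -> Prop) {FF : Filter F} (f : T -> R) k :
  filterlim f F (locally 0) -> filterlim (fun x => k * f x) F (locally 0).
Proof.
  intros H. assert (Hc : continuous (fun u => k * u) 0) by (apply contD; auto_derive; auto).
  unfold continuous in Hc. rewrite Rmult_0_r in Hc.
  exact (filterlim_comp _ _ _ f (fun u => k * u) _ _ _ H Hc).
Qed.

Lemma Rpower_add1 y c : 0 < y -> Rpower y (c + 1) = Rpower y c * y.
Proof. intros Hy. rewrite Rpower_plus, Rpower_1; auto. Qed.

Lemma Base11 r : 0 < r -> is_RInt_gen (kab r 1 1) (at_right 0) (Rbar_locally p_infty) (/ r).
Proof.
  intros Hr.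
  apply (ext_pos _ _ (fun x => / ((1 + r * x) * (1 + r * x))) _ _ at_right_pos pinf_pos).
  { intros x Hx. unfold kab. replace (1 - 1) with 0 by ring. rewrite Rpower_O by auto.
    rewrite Rpower_add1, Rpower_1 by nra. field. nra. }
  apply (is_RInt_gen_val _ (0 - - / (r * (1 + r * 0)))); [|field; lra].
  apply (antideriv_gen _ _ (fun x => - / (r * (1 + r * x)))).
  - apply at_right_pos.
  - apply pinf_pos.
  - intros x Hx. auto_derive. sidec. field. nra.
  - intros x Hx. apply contD. auto_derive. sidec.
  - apply (cont_at_right (fun x => - / (r * (1 + r * x)))). apply contD. auto_derive. sidec.
  - apply (squeeze0 _ _ (fun x => / r * (Rpower x 0 / Rpower (1 + r * x) 1))).
    + exists 0. intros x Hx. rewrite Rpower_O, Rpower_1 by nra. rewrite Rabs_Ropp, Rabs_pos_eq.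
      right. field. nra. left. apply Rinv_0_lt_compat. nra.
    + apply lim_scal0; [typeclasses eauto|]. apply frac_liminf; lra.
Qed.

Lemma Base1h r : 0 < r -> is_RInt_gen (kab r 1 (/ 2)) (at_right 0) (Rbar_locally p_infty) (2 / r).
Proof.
  intros Hr.
  apply (ext_pos _ _ (fun x => / ((1 + r * x) * sqrt (1 + r * x))) _ _ at_right_pos pinf_pos).
  { intros x Hx. unfold kab. replace (1 - 1) with 0 by ring. rewrite Rpower_O by auto.
    replace (1 + / 2) with (/ 2 + 1) by ring.
    assert (Hs := sqrt_lt_R0 (1 + r * x) ltac:(nra)).
    rewrite Rpower_add1, Rpower_sqrt by nra. field. split; nra. }
  apply (is_RInt_gen_val _ (0 - - (2 / (r * sqrt (1 + r * 0))))).
  2:{ rewrite Rmult_0_r, Rplus_0_r, sqrt_1. field. lra. }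
  apply (antideriv_gen _ _ (fun x => - (2 / (r * sqrt (1 + r * x))))).
  - apply at_right_pos.
  - apply pinf_pos.
  - intros x Hx. assert (Hs := sqrt_lt_R0 (1 + r * x) ltac:(nra)).
    auto_derive. sidec. 
    assert (Hv := sqrt_sqrt (1 + r * x) ltac:(nra)).
    set (v := sqrt (1 + r * x)) in *. rewrite <- Hv. field. lra.
  - intros x Hx. assert (Hs := sqrt_lt_R0 (1 + r * x) ltac:(nra)). apply contD. auto_derive. sidec.
  - apply (cont_at_right (fun x => - (2 / (r * sqrt (1 + r * x))))). apply contD. auto_derive.
    rewrite Rmult_0_r, Rplus_0_r, sqrt_1. sidec.
  - apply (squeeze0 _ _ (fun x => 2 / r * (Rpower x 0 / Rpower (1 + r * x) (/ 2)))).
    + exists 0. intros x Hx. rewrite Rpower_O, Rpower_sqrt by nra.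
      assert (Hs := sqrt_lt_R0 (1 + r * x) ltac:(nra)).
      rewrite Rabs_Ropp, Rabs_pos_eq.
      right. field. lra. apply Rlt_le, Rdiv_lt_0_compat. lra. nra.
    + apply lim_scal0; [typeclasses eauto|]. apply frac_liminf; lra.
Qed.

Lemma Baseh1 r : 0 < r -> is_RInt_gen (kab r (/ 2) 1) (at_right 0) (Rbar_locally p_infty) (2 / sqrt r).
Proof.
  intros Hr. assert (Hsr := sqrt_lt_R0 r Hr).
  apply (ext_pos _ _ (fun x => / (sqrt x * ((1 + r * x) * sqrt (1 + r * x)))) _ _ at_right_pos pinf_pos).
  { intros x Hx. unfold kab. replace (/ 2 - 1) with (- / 2) by field.
    assert (Hs := sqrt_lt_R0 (1 + r * x) ltac:(nra)). assert (Hs' := sqrt_lt_R0 x Hx).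
    replace (/ 2 + 1) with (/ 2 + 1) by ring.
    rewrite Rpower_Ropp, Rpower_add1, !Rpower_sqrt by nra. field. split; nra. }
  apply (is_RInt_gen_val _ (2 / sqrt r - 0)); [|ring].
  apply (antideriv_gen _ _ (fun x => 2 * sqrt x / sqrt (1 + r * x))).
  - apply at_right_pos.
  - apply pinf_pos.
  - intros x Hx. assert (Hs := sqrt_lt_R0 (1 + r * x) ltac:(nra)). assert (Hs' := sqrt_lt_R0 x Hx).
    auto_derive. sidec.
    assert (Hv := sqrt_sqrt (1 + r * x) ltac:(nra)). assert (Hu := sqrt_sqrt x ltac:(nra)).
    set (v := sqrt (1 + r * x)) in *. set (u := sqrt x) in *. clearbody v u. transitivity ((v*v - r*(u*u)) / (u*(v*v)*v)). field. lra. rewrite Hv, Hu. field. split; nra.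
  - intros x Hx. assert (Hs := sqrt_lt_R0 (1 + r * x) ltac:(nra)). assert (Hs' := sqrt_lt_R0 x Hx).
    apply contD. auto_derive. sidec.
  - apply (squeeze0 _ _ (fun x => 2 * (Rpower x (/ 2) / Rpower (1 + r * x) (/ 2)))).
    + exists (mkposreal 1 Rlt_0_1). intros x _ Hx. rewrite !Rpower_sqrt by nra.
      assert (Hs := sqrt_lt_R0 (1 + r * x) ltac:(nra)). assert (Hs' := sqrt_lt_R0 x Hx).
      rewrite Rabs_pos_eq. right. field. lra. apply Rlt_le, Rdiv_lt_0_compat; nra.
    + apply lim_scal0; [typeclasses eauto|]. apply frac_lim0; lra.
  - apply (filterlim_ext_loc (fun x => 2 / sqrt (Rpower x (- 1%R) + r))).
    { exists 0. intros x Hx. rewrite Rpower_Ropp, Rpower_1 by lra.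
      assert (Hs := sqrt_lt_R0 (1 + r * x) ltac:(nra)). assert (Hs' := sqrt_lt_R0 x Hx).
      replace (/ x + r) with ((1 + r * x) / x) by (field; lra).
      rewrite sqrt_div_alt by lra. field. lra. }
    apply (filterlim_comp _ _ _ (fun x => Rpower x (- 1%R)) (fun u => 2 / sqrt (u + r)) _ (locally 0)).
    apply Rpow_liminf; lra.
    assert (Hc : continuous (fun u => 2 / sqrt (u + r)) 0).
    { apply contD. auto_derive. rewrite Rplus_0_l. repeat split; auto. lra. }
    unfold continuous in Hc. rewrite Rplus_0_l in Hc. exact Hc.
Qed.

Lemma atan_derive y : is_derive atan y (/ (1 + y ^ 2)).
Proof. apply is_derive_Reals, derivable_pt_lim_atan. Qed.

Lemma atan_cont y : continuous atan y.
Proof. apply contD. eexists. apply atan_derive. Qed.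

Lemma Basehh r : 0 < r -> is_RInt_gen (kab r (/ 2) (/ 2)) (at_right 0) (Rbar_locally p_infty) (PI / sqrt r).
Proof.
  intros Hr. assert (Hsr := sqrt_lt_R0 r Hr).
  apply (ext_pos _ _ (fun x => / (sqrt x * (1 + r * x))) _ _ at_right_pos pinf_pos).
  { intros x Hx. unfold kab. replace (/ 2 - 1) with (- / 2) by field.
    assert (Hs' := sqrt_lt_R0 x Hx).
    replace (/ 2 + / 2) with 1 by field.
    rewrite Rpower_Ropp, Rpower_1, !Rpower_sqrt by nra. field. split; nra. }
  apply (is_RInt_gen_val _ (2 / sqrt r * (PI / 2 - 0) - 2 / sqrt r * atan (sqrt r * sqrt 0))).
  2:{ rewrite sqrt_0, Rmult_0_r, atan_0. field. lra. }
  apply (antideriv_gen _ _ (fun x => 2 / sqrt r * atan (sqrt r * sqrt x))).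
  - apply at_right_pos.
  - apply pinf_pos.
  - intros x Hx. assert (Hs' := sqrt_lt_R0 x Hx).
    assert (H1 : is_derive (fun x => sqrt r * sqrt x) x (sqrt r * / (2 * sqrt x))).
    { auto_derive. lra. field. lra. }
    assert (H := is_derive_comp atan _ x _ _ (atan_derive (sqrt r * sqrt x)) H1).
    apply (is_derive_scal _ _ (2 / sqrt r) _) in H.
    replace (/ (sqrt x * (1 + r * x))) with (2 / sqrt r * scal (sqrt r * / (2 * sqrt x)) (/ (1 + (sqrt r * sqrt x) ^ 2))).
    exact H.
    unfold scal; simpl; unfold mult; simpl.
    assert (Hrx : sqrt r * sqrt x * (sqrt r * sqrt x * 1) = r * x).
    { rewrite Rmult_1_r. replace (sqrt r * sqrt x * (sqrt r * sqrt x)) with ((sqrt r * sqrt r) * (sqrt x * sqrt x)) by ring.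
      rewrite !sqrt_sqrt; lra. }
    rewrite Hrx. field. split; nra.
  - intros x Hx. assert (Hs' := sqrt_lt_R0 x Hx). apply contD. auto_derive. sidec.
  - apply (cont_at_right (fun x => 2 / sqrt r * atan (sqrt r * sqrt x))).
    apply (continuous_comp sqrt (fun u => 2 / sqrt r * atan (sqrt r * u))).
    apply continuity_pt_filterlim, continuity_pt_sqrt. lra.
    apply (continuous_comp (fun u => sqrt r * u) (fun v => 2 / sqrt r * atan v)).
    apply contD. auto_derive. auto.
    apply (continuous_comp atan (fun v => 2 / sqrt r * v)). apply atan_cont.
    apply contD. auto_derive. auto.
  - apply (filterlim_ext_loc (fun x => 2 / sqrt r * (PI / 2 - atan (/ sqrt r * Rpower x (- / 2))))).
    { exists 0. intros x Hx. assert (Hs' := sqrt_lt_R0 x Hx). rewrite Rpower_Ropp, Rpower_sqrt by lra.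
      replace (/ sqrt r * / sqrt x) with (/ (sqrt r * sqrt x)) by (field; lra).
      rewrite atan_inv. ring. nra. }
    apply (filterlim_comp _ _ _ (fun x => / sqrt r * Rpower x (- / 2)) (fun u => 2 / sqrt r * (PI / 2 - atan u)) _ (locally 0)).
    apply lim_scal0; [typeclasses eauto|]. apply Rpow_liminf; lra.
    assert (Hc : continuous (fun u => 2 / sqrt r * (PI / 2 - atan u)) 0).
    { apply (continuous_comp atan (fun v => 2 / sqrt r * (PI / 2 - v))). apply atan_cont.
      apply contD. auto_derive. auto. }
    unfold continuous in Hc. rewrite atan_0 in Hc. exact Hc.
Qed.

Definition Vj r a b := Gamma a * Gamma b / (Gamma (a + b) * Rpower r a).

Lemma hs_add i j : hs i + hs j = hs (i + j + 1).
Proof. unfold hs. rewrite !S_INR, !plus_INR. simpl. field. Qed.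

Lemma hs0 : hs 0 = / 2. Proof. unfold hs. simpl. field. Qed.
Lemma hs1 : hs 1 = 1. Proof. unfold hs. simpl. field. Qed.

Lemma Gpos k : 0 < Gamma (hs k). Proof. apply Gam_all. Qed.

Lemma Vj_rec1 r i j : 0 < r -> Vj r (hs i + 1) (hs j) = hs i / ((hs i + hs j) * r) * Vj r (hs i) (hs j).
Proof.
  intros Hr. unfold Vj.
  replace (hs i + 1 + hs j) with (hs (i + j + 1) + 1) by (rewrite <- hs_add; ring).
  rewrite !Gamma_rec_hs, Rpower_add1 by auto. rewrite <- hs_add.
  assert (H1 := Gpos i). assert (H2 := Gpos (i + j + 1)). rewrite <- hs_add in H2.
  assert (H3 := Rpower_pos r (hs i)). assert (H4 := hs_pos i). assert (H5 := hs_pos j).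
  field. repeat split; lra.
Qed.

Lemma Vj_rec2 r i j : 0 < r -> Vj r (hs i) (hs j + 1) = Vj r (hs i) (hs j) - r * Vj r (hs i + 1) (hs j).
Proof.
  intros Hr. rewrite Vj_rec1 by auto. unfold Vj.
  replace (hs i + (hs j + 1)) with (hs (i + j + 1) + 1) by (rewrite <- hs_add; ring).
  rewrite !Gamma_rec_hs. rewrite <- hs_add.
  assert (H1 := Gpos i). assert (H2 := Gpos (i + j + 1)). rewrite <- hs_add in H2.
  assert (H3 := Rpower_pos r (hs i)). assert (H4 := hs_pos i). assert (H5 := hs_pos j).
  field. repeat split; lra.
Qed.

Lemma pair_ind (P : nat -> Prop) : P 0%nat -> P 1%nat -> (forall n, P n -> P (S (S n))) -> forall n, P n.
Proof.
  intros H0 H1 HS n. assert (H : P n /\ P (S n)).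
  { induction n as [|n [IH1 IH2]]; split; auto. }
  apply H.
Qed.

Lemma G32 : Gamma (/ 2 + 1) = / 2 * Gamma (/ 2).
Proof. replace (/ 2 + 1) with (hs 0 + 1) by (rewrite hs0; ring). rewrite Gamma_rec_hs, hs0. ring. Qed.
Lemma G2 : Gamma (1 + 1) = 1.
Proof. replace (1 + 1) with (hs 1 + 1) by (rewrite hs1; ring). rewrite Gamma_rec_hs. rewrite hs1, Gamma_one. ring. Qed.

Lemma Ghalf_pos : 0 < Gamma (/ 2).
Proof. rewrite <- hs0. apply Gpos. Qed.

Lemma J_all r i j : 0 < r -> is_RInt_gen (kab r (hs i) (hs j)) (at_right 0) (Rbar_locally p_infty) (Vj r (hs i) (hs j)).
Proof.
  intros Hr. assert (Hsr := sqrt_lt_R0 r Hr). assert (Hg := Ghalf_pos).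
  assert (Hrow : forall q, (q = 0 \/ q = 1)%nat -> forall i, is_RInt_gen (kab r (hs i) (hs q)) (at_right 0) (Rbar_locally p_infty) (Vj r (hs i) (hs q))).
  { intros q Hq. apply pair_ind.
    - destruct Hq as [->| ->].
      + rewrite hs0. apply (is_RInt_gen_val _ _ _ (Basehh r Hr)). unfold Vj.
        replace (/ 2 + / 2) with 1 by field. rewrite Gamma_one, Gamma_half_sq, Rpower_sqrt by auto. field. lra.
      + rewrite hs0, hs1. apply (is_RInt_gen_val _ _ _ (Baseh1 r Hr)). unfold Vj.
        replace (/ 2 + 1) with (/ 2 + 1) by ring. rewrite G32, Gamma_one, Rpower_sqrt by auto. field. lra.
    - destruct Hq as [->| ->].
      + rewrite hs0, hs1. apply (is_RInt_gen_val _ _ _ (Base1h r Hr)). unfold Vj.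
        replace (1 + / 2) with (/ 2 + 1) by ring. rewrite G32, Gamma_one, Rpower_1 by auto. field. lra.
      + rewrite hs1. apply (is_RInt_gen_val _ _ _ (Base11 r Hr)). unfold Vj.
        rewrite G2, Gamma_one, Rpower_1 by auto. field. lra.
    - intros n Hn. rewrite hs_SS. rewrite Vj_rec1 by auto. apply J_rec1; auto using hs_pos. }
  revert i. apply (pair_ind (fun j => forall i, is_RInt_gen (kab r (hs i) (hs j)) (at_right 0) (Rbar_locally p_infty) (Vj r (hs i) (hs j)))).
  - apply Hrow; auto.
  - apply Hrow; auto.
  - intros n Hn i. rewrite hs_SS. rewrite Vj_rec2 by auto. apply J_rec2; auto.
    rewrite <- hs_SS. apply Hn.
Qed.

Lemma lim_le {T} (F : (T -> Prop) -> Prop) {FF : ProperFilter F} (g : T -> R) l c :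
  filterlim g F (locally l) -> F (fun y => g y <= c) -> l <= c.
Proof.
  intros Hl Hc. destruct (Rle_or_lt l c) as [H|H]; auto. exfalso.
  assert (He : 0 < l - c) by lra.
  apply (filterlim_locally (U:=R_UniformSpace)) with (eps := mkposreal _ He) in Hl.
  destruct (filter_ex _ (filter_and _ _ Hl Hc)) as [y [H1 H2]].
  change (Rabs (g y - l) < l - c) in H1. apply Rabs_lt_between' in H1. lra.
Qed.

Lemma lim_ge {T} (F : (T -> Prop) -> Prop) {FF : ProperFilter F} (g : T -> R) l c :
  filterlim g F (locally l) -> F (fun y => c <= g y) -> c <= l.
Proof.
  intros Hl Hc. destruct (Rle_or_lt c l) as [H|H]; auto. exfalso.
  assert (He : 0 < c - l) by lra.
  apply (filterlim_locally (U:=R_UniformSpace)) with (eps := mkposreal _ He) in Hl.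
  destruct (filter_ex _ (filter_and _ _ Hl Hc)) as [y [H1 H2]].
  change (Rabs (g y - l) < c - l) in H1. apply Rabs_lt_between' in H1. lra.
Qed.

Lemma mono_le (D dD : R -> R) u v : u <= v ->
  (forall y, u <= y <= v -> is_derive D y (dD y)) ->
  (forall y, u <= y <= v -> 0 <= dD y) -> D u <= D v.
Proof.
  intros Huv Hd Hs. destruct (Req_dec u v) as [->|Hne]. lra.
  destruct (MVT_gen D u v dD) as [c [Hc Heq]].
  - intros y Hy. rewrite Rmin_left, Rmax_right in Hy by lra. apply Hd; lra.
  - intros y Hy. rewrite Rmin_left, Rmax_right in Hy by lra.
    apply continuity_pt_filterlim. apply contD. eexists. apply Hd; lra.
  - rewrite Rmin_left, Rmax_right in Hc by lra.
    assert (0 <= dD c * (v - u)) by (apply Rmult_le_pos; [apply Hs; lra | lra]). lra.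
Qed.

Section Tail.
Variable f : R -> R.
Hypothesis fcont : forall x, 0 < x -> continuous f x.

Definition Pf (y : R) := RInt f 1 y.

Lemma f_ex a b : 0 < a -> 0 < b -> ex_RInt f a b.
Proof. intros Ha Hb. apply exRc. intros z Hz. apply fcont.
  eapply Rlt_le_trans; [|apply Hz]. apply Rmin_glb_lt; lra. Qed.

Lemma Pf_derive y : 0 < y -> is_derive Pf y (f y).
Proof.
  intros Hy. apply is_derive_RInt with 1.
  - assert (Hp : 0 < y / 2) by lra. exists (mkposreal _ Hp). intros z Hz.
    change (Rabs (z - y) < y / 2) in Hz. apply Rabs_lt_between' in Hz.
    apply RInt_correct, f_ex; lra.
  - apply fcont; auto.
Qed.

Lemma Pf_chasles a b : 0 < a -> 0 < b -> RInt f a b = Pf b - Pf a.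
Proof.
  intros Ha Hb. unfold Pf. rewrite <- (RInt_Chasles f 1 a b) by (apply f_ex; lra).
  unfold plus; simpl. assert (Hr : forall u v : R, v = u + v - u) by (intros; ring). apply Hr.
Qed.

Variable L : R.
Hypothesis Hgen : is_RInt_gen f (at_right 0) (Rbar_locally p_infty) L.

Lemma gen_split (eps : posreal) : exists Q1 Q2, at_right 0 Q1 /\ Rbar_locally p_infty Q2 /\
  forall a b, Q1 a -> Q2 b -> 0 < a -> 0 < b -> Rabs (Pf b - Pf a - L) < eps.
Proof.
  assert (H := Hgen (fun y => Rabs (y - L) < eps)).
  destruct H as [Q1 Q2 HQ1 HQ2 HQ].
  { exists eps. intros y Hy. exact Hy. }
  exists Q1, Q2. split; auto. split; auto. intros a b Ha Hb Ha0 Hb0.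
  destruct (HQ a b Ha Hb) as [y [Hy1 Hy2]]. simpl in Hy1.
  rewrite <- Pf_chasles by auto. rewrite (is_RInt_unique _ _ _ _ Hy1). exact Hy2.
Qed.

Lemma Pinf_ex : exists l, filterlim Pf (Rbar_locally p_infty) (locally l).
Proof.
  apply (filterlim_locally_cauchy (U:=R_CompleteSpace)). intros eps.
  assert (He : 0 < eps / 2) by (destruct eps; simpl; lra).
  destruct (gen_split (mkposreal _ He)) as [Q1 [Q2 [H1 [H2 H3]]]].
  destruct (filter_ex _ (filter_and _ _ H1 at_right_pos)) as [a0 [Ha0 Ha0']].
  exists (fun b => Q2 b /\ 0 < b). split. apply filter_and; auto. apply pinf_pos.
  intros u v [Hu Hu'] [Hv Hv']. simpl in *.
  assert (A1 := H3 a0 u Ha0 Hu Ha0' Hu'). assert (A2 := H3 a0 v Ha0 Hv Ha0' Hv').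
  change (Rabs (Pf v - Pf u) < eps).
  apply Rabs_lt_between' in A1. apply Rabs_lt_between' in A2. apply Rabs_lt_between'. lra.
Qed.

Lemma P0_ex : exists l, filterlim Pf (at_right 0) (locally l).
Proof.
  apply (filterlim_locally_cauchy (U:=R_CompleteSpace)). intros eps.
  assert (He : 0 < eps / 2) by (destruct eps; simpl; lra).
  destruct (gen_split (mkposreal _ He)) as [Q1 [Q2 [H1 [H2 H3]]]].
  destruct (filter_ex _ (filter_and _ _ H2 pinf_pos)) as [b0 [Hb0 Hb0']].
  exists (fun a => Q1 a /\ 0 < a). split. apply filter_and; auto. apply at_right_pos.
  intros u v [Hu Hu'] [Hv Hv']. simpl in *.
  assert (A1 := H3 u b0 Hu Hb0 Hu' Hb0'). assert (A2 := H3 v b0 Hv Hb0 Hv' Hb0').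
  change (Rabs (Pf v - Pf u) < eps).
  apply Rabs_lt_between' in A1. apply Rabs_lt_between' in A2. apply Rabs_lt_between'. lra.
Qed.

End Tail.

Section FDist.
Variables m n : nat.
Hypothesis Hm : (0 < m)%nat.
Hypothesis Hn : (0 < n)%nat.

Let M := INR m.
Let N := INR n.
Lemma M_pos : 0 < INR m. Proof. apply lt_0_INR; auto. Qed.
Lemma N_pos : 0 < INR n. Proof. apply lt_0_INR; auto. Qed.

Lemma hs_pred k : (0 < k)%nat -> hs (pred k) = INR k / 2.
Proof. intros Hk. unfold hs. rewrite Nat.succ_pred_pos by auto. reflexivity. Qed.

Definition rr := INR m / INR n.
Lemma rr_pos : 0 < rr. Proof. unfold rr. apply Rdiv_lt_0_compat; [apply M_pos|apply N_pos]. Qed.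

Lemma GA : 0 < Gamma (INR m / 2). Proof. rewrite <- hs_pred by auto. apply Gpos. Qed.
Lemma GB : 0 < Gamma (INR n / 2). Proof. rewrite <- hs_pred by auto. apply Gpos. Qed.
Lemma GC : 0 < Gamma ((INR n + INR m) / 2).
Proof. replace ((INR n + INR m) / 2) with (hs (pred m) + hs (pred n)) by (rewrite !hs_pred by auto; field).
  rewrite hs_add. apply Gpos. Qed.

Lemma dens_eq x : F_density m n x = kab rr (INR m / 2) (INR n / 2) x / Vj rr (INR m / 2) (INR n / 2).
Proof.
  unfold F_density, kab, Vj, rr.
  replace ((INR m - 2) / 2) with (INR m / 2 - 1) by field.
  replace (INR m / 2 + INR n / 2) with ((INR n + INR m) / 2) by field.
  assert (H1 := GA). assert (H2 := GB). assert (H3 := GC).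
  assert (H4 := Rpower_pos (INR m / INR n) (INR m / 2)).
  assert (H5 := Rpower_pos (1 + INR m / INR n * x) ((INR n + INR m) / 2)).
  field. repeat split; lra.
Qed.

Lemma dens_total : is_RInt_gen (F_density m n) (at_right 0) (Rbar_locally p_infty) 1.
Proof.
  assert (H := J_all rr (pred m) (pred n) rr_pos). rewrite !hs_pred in H by auto.
  apply (is_RInt_gen_scal _ (/ Vj rr (INR m / 2) (INR n / 2))) in H.
  eapply is_RInt_gen_ext in H.
  apply (is_RInt_gen_val _ _ _ H).
  unfold scal; simpl; unfold mult; simpl. field.
  unfold Vj. assert (H1 := GA). assert (H2 := GB).
  assert (H3 := Rpower_pos rr (INR m / 2)).
  replace (INR m / 2 + INR n / 2) with ((INR n + INR m) / 2) by field. assert (H4 := GC).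
  apply Rgt_not_eq. apply Rdiv_lt_0_compat. nra. nra.
  apply filter_forall. intros ab x _. rewrite dens_eq. unfold scal; simpl; unfold mult; simpl. unfold Rdiv. ring.
Qed.

Lemma dens_cont x : 0 < x -> continuous (F_density m n) x.
Proof.
  intros Hx. assert (Hr := rr_pos). unfold rr in Hr.
  apply contD. unfold F_density, Rpower. auto_derive. sidec.
  assert (H1 := GA). assert (H2 := GB). apply Rgt_not_eq. apply Rmult_lt_0_compat. nra. apply exp_pos.
Qed.

Lemma dens_pos x : 0 < x -> 0 < F_density m n x.
Proof.
  intros Hx. unfold F_density. assert (H1 := GA). assert (H2 := GB). assert (H3 := GC).
  apply Rdiv_lt_0_compat. repeat apply Rmult_lt_0_compat; auto; apply Rpower_pos.
  repeat apply Rmult_lt_0_compat; auto; apply Rpower_pos.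
Qed.

End FDist.

Section Bound.
Variables m n : nat.
Hypothesis Hm : (0 < m)%nat.
Hypothesis Hn : (0 < n)%nat.

Definition phi (y : R) := INR m * INR n * (y - 1) / (2 * (INR n + INR m * y)).

Lemma B_derive y : 0 < y -> is_derive (F_bound m n) y (- F_bound m n y * phi y / y).
Proof.
  intros Hy. assert (HM := M_pos m Hm). assert (HN := N_pos n Hn).
  unfold F_bound, phi, Rpower. auto_derive.
  repeat split; try lra; try (apply Rgt_not_eq; nra).
  apply Rmult_lt_0_compat; [lra| apply Rinv_0_lt_compat; nra].
  unfold Rdiv. set (E1 := exp (INR m * / 2 * ln y)).
  set (E2 := exp ((INR m + INR n) * / 2 * ln ((INR n + INR m) * / (INR n + INR m * y)))).
  field. repeat split; try lra; apply Rgt_not_eq; nra.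
Qed.

Lemma fB_rel y : 0 < y -> F_density m n y * y = F_bound m n y * F_density m n 1.
Proof.
  intros Hy. assert (HM := M_pos m Hm). assert (HN := N_pos n Hn).
  assert (H1 := GA m Hm). assert (H2 := GB n Hn). assert (H3 := GC m n Hm Hn).
  unfold F_density, F_bound, Rpower.
  assert (Hr : 0 < INR m / INR n) by (apply Rdiv_lt_0_compat; lra).
  assert (Hry : 0 < INR m / INR n * y) by (apply Rmult_lt_0_compat; lra).
  replace ((INR n + INR m) / (INR n + INR m * y)) with ((1 + INR m / INR n * 1) / (1 + INR m / INR n * y)).
  2:{ field. repeat split; try lra. apply Rgt_not_eq. nra. }
  rewrite (ln_div (1 + INR m / INR n * 1) (1 + INR m / INR n * y)) by nra. rewrite ln_1.
  set (LA := ln (1 + INR m / INR n * 1)). set (LB := ln (1 + INR m / INR n * y)).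
  replace ((INR m + INR n) / 2 * (LA - LB))
    with ((INR n + INR m) / 2 * LA + - ((INR n + INR m) / 2 * LB)) by field.
  assert (Ey : exp (INR m / 2 * ln y) = exp ((INR m - 2) / 2 * ln y) * y).
  { set (LY := ln y). replace (INR m / 2 * LY) with ((INR m - 2) / 2 * LY + LY) by field.
    rewrite exp_plus. unfold LY. rewrite exp_ln by lra. reflexivity. }
  rewrite Ey. rewrite exp_plus, exp_Ropp. rewrite Rmult_0_r, exp_0.
  set (E1 := exp ((INR n + INR m) / 2 * LA)).
  set (E2 := exp ((INR n + INR m) / 2 * LB)).
  assert (0 < E1) by apply exp_pos. assert (0 < E2) by apply exp_pos.
  field. repeat split; lra.
Qed.

Lemma B_one : F_bound m n 1 = 1.
Proof.
  assert (HM := M_pos m Hm). assert (HN := N_pos n Hn).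
  unfold F_bound, Rpower. replace ((INR n + INR m) / (INR n + INR m * 1)) with 1 by (field; lra).
  rewrite ln_1, !Rmult_0_r, exp_0. ring.
Qed.

Lemma B_pos y : 0 < F_bound m n y.
Proof. unfold F_bound. apply Rmult_lt_0_compat; apply Rpower_pos. Qed.

Lemma phi_mono y1 y2 : 0 < y1 -> y1 <= y2 -> phi y1 <= phi y2.
Proof.
  intros H1 H2. assert (HM := M_pos m Hm). assert (HN := N_pos n Hn).
  assert (P1 : 0 < INR n + INR m * y1) by nra. assert (P2 : 0 < INR n + INR m * y2) by nra.
  assert (E : phi y2 - phi y1 = INR m * INR n * (INR n + INR m) * (y2 - y1) / (2 * (INR n + INR m * y1) * (INR n + INR m * y2))).
  { unfold phi. field. lra. }
  assert (0 <= INR m * INR n * (INR n + INR m) * (y2 - y1) / (2 * (INR n + INR m * y1) * (INR n + INR m * y2))).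
  { apply Rmult_le_pos. repeat apply Rmult_le_pos; lra. left. apply Rinv_0_lt_compat.
    repeat apply Rmult_lt_0_compat; lra. }
  lra.
Qed.

End Bound.

Lemma at_point_lim (g : R -> R) x : filterlim g (at_point x) (locally (g x)).
Proof. intros P HP. unfold filtermap, at_point. apply locally_singleton. exact HP. Qed.

Theorem corollary10 (m n : nat) (Hm : (0 < m)%nat) (Hn : (0 < n)%nat) :
  (forall x : R, 1 <= x -> F_upper_tail m n x <= F_bound m n x) /\
  (forall x : R, 0 < x <= 1 -> F_cdf m n x <= F_bound m n x) /\
  (forall x y : R, 0 < x -> x < y -> y < 1 -> F_bound m n x < F_bound m n y) /\
  (forall x y : R, 1 < x -> x < y -> F_bound m n y < F_bound m n x).
Proof.
  assert (HM := M_pos m Hm). assert (HN := N_pos n Hn).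
  set (f := F_density m n).
  set (B := F_bound m n).
  assert (fcont : forall x, 0 < x -> continuous f x) by (intros; apply dens_cont; auto).
  assert (fpos : forall x, 0 < x -> 0 < f x) by (intros; apply dens_pos; auto).
  assert (Htot := dens_total m n Hm Hn). fold f in Htot.
  destruct (Pinf_ex f fcont 1 Htot) as [l1 Hl1].
  destruct (P0_ex f fcont 1 Htot) as [l0 Hl0].
  set (P := Pf f) in *.
  assert (Pd : forall y, 0 < y -> is_derive P y (f y)) by (intros; apply Pf_derive; auto).
  assert (Hdiff : l1 - l0 = 1).
  { assert (H := antideriv_gen (at_right 0) (Rbar_locally p_infty) P f l0 l1 at_right_pos pinf_pos Pd fcont Hl0 Hl1).
    apply (is_RInt_gen_unique (V:=R_CompleteNormedModule)) in H. apply (is_RInt_gen_unique (V:=R_CompleteNormedModule)) in Htot. congruence. }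
  assert (Hup : forall x, 0 < x -> F_upper_tail m n x = l1 - P x).
  { intros x Hx. unfold F_upper_tail. fold f. apply is_RInt_gen_unique.
    apply (antideriv_gen (at_point x) (Rbar_locally p_infty) P f); auto. apply pinf_pos. apply at_point_lim. }
  assert (Hcdf : forall x, 0 < x -> F_cdf m n x = P x - l0).
  { intros x Hx. unfold F_cdf. fold f. apply is_RInt_gen_unique.
    apply (antideriv_gen (at_right 0) (at_point x) P f); auto. apply at_right_pos. apply at_point_lim. }
  assert (HP1 : P 1 = 0) by (unfold P, Pf; rewrite RInt_point; reflexivity).
  assert (Hl0n : l0 <= 0).
  { apply (lim_le (at_right 0) P); auto. exists (mkposreal 1 Rlt_0_1). intros y Hy Hy0.
    change (Rabs (y - 0) < 1) in Hy. rewrite Rminus_0_r, Rabs_pos_eq in Hy by lra.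
    unfold P, Pf. rewrite <- opp_RInt_swap by (apply f_ex; auto; lra).
    assert (0 <= RInt f y 1). { apply RInt_ge_0. lra. apply f_ex; auto; lra. intros z Hz. left; apply fpos; lra. }
    unfold opp; simpl. lra. }
  assert (Hl1p : 0 <= l1).
  { apply (lim_ge (Rbar_locally p_infty) P); auto. exists 1. intros y Hy.
    unfold P, Pf. apply RInt_ge_0. lra. apply f_ex; auto; lra. intros z Hz. left; apply fpos; lra. }
  assert (Bpos : forall y, 0 < B y) by (intros; apply B_pos).
  assert (B1 : B 1 = 1) by (apply B_one; auto).
  assert (f1 := fpos 1 Rlt_0_1).
  assert (frel : forall y, 0 < y -> f y = B y * f 1 / y).
  { intros y Hy. assert (H := fB_rel m n Hm Hn y Hy). fold f B in H. apply (Rmult_eq_reg_r y); [|lra]. rewrite H. field. lra. }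
  assert (Bd : forall y, 0 < y -> is_derive B y (- B y * phi m n y / y)) by (intros; apply B_derive; auto).
  assert (Dup : forall y, 0 < y -> is_derive (fun y => B y + P y) y (B y / y * (f 1 - phi m n y))).
  { intros y Hy. replace (B y / y * (f 1 - phi m n y)) with (plus (- B y * phi m n y / y) (f y)).
    apply (is_derive_plus B P); auto. rewrite frel by auto. unfold plus; simpl. field. lra. }
  assert (Dlow : forall y, 0 < y -> is_derive (fun y => B y - P y) y (- (B y / y * (phi m n y + f 1)))).
  { intros y Hy. replace (- (B y / y * (phi m n y + f 1))) with (minus (- B y * phi m n y / y) (f y)).
    apply (is_derive_minus B P); auto. rewrite frel by auto. unfold minus, plus, opp; simpl. field. lra. }
  assert (BY : forall y, 0 < y -> 0 < B y / y) by (intros; apply Rdiv_lt_0_compat; auto).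
  split; [|split; [|split]].
  -
    intros x Hx. rewrite Hup by lra. fold B.
    destruct (Rle_or_lt (phi m n x) (f 1)) as [Hc|Hc].
    + assert (H := mono_le (fun y => B y + P y) _ 1 x Hx (fun y Hy => Dup y ltac:(lra))).
      simpl in H. rewrite B1, HP1 in H.
      assert (H' : 1 + 0 <= B x + P x).
      { apply H. intros y Hy. apply Rmult_le_pos. left; apply BY; lra.
        assert (phi m n y <= phi m n x) by (apply phi_mono; auto; lra). lra. }
      lra.
    + assert (H : l1 <= B x + P x).
      { apply (lim_le (Rbar_locally p_infty) P); auto. exists x. intros y Hy.
        assert (H := mono_le (fun y => - (B y + P y)) (fun y => - (B y / y * (f 1 - phi m n y))) x y ltac:(lra)).
        simpl in H.
        assert (H' : - (B x + P x) <= - (B y + P y)).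
        { apply H.
          - intros z Hz. apply (is_derive_opp (fun y => B y + P y)). apply Dup. lra.
          - intros z Hz. assert (phi m n x <= phi m n z) by (apply phi_mono; auto; lra).
            assert (0 < B z / z) by (apply BY; lra). nra. }
        assert (Hb := Bpos y). lra. }
      lra.
  -
    intros x [Hx0 Hx1]. rewrite Hcdf by lra. fold B.
    destruct (Rle_or_lt (phi m n x) (- f 1)) as [Hc|Hc].
    + assert (H : P x - B x <= l0).
      { apply (lim_ge (at_right 0) P); auto. exists (mkposreal x Hx0). intros y Hy Hy0.
        change (Rabs (y - 0) < x) in Hy. rewrite Rminus_0_r, Rabs_pos_eq in Hy by lra.
        assert (H := mono_le (fun y => B y - P y) _ y x ltac:(lra) (fun z Hz => Dlow z ltac:(lra))).
        simpl in H.
        assert (H' : B y - P y <= B x - P x).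
        { apply H. intros z Hz. assert (phi m n z <= phi m n x) by (apply phi_mono; auto; lra).
          assert (0 < B z / z) by (apply BY; lra). nra. }
        assert (Hb := Bpos y). lra. }
      lra.
    + assert (H := mono_le (fun y => - (B y - P y)) (fun y => B y / y * (phi m n y + f 1)) x 1 Hx1).
      simpl in H.
      assert (H' : - (B x - P x) <= - (B 1 - P 1)).
      { apply H.
        - intros z Hz. replace (B z / z * (phi m n z + f 1)) with (- - (B z / z * (phi m n z + f 1))) by ring.
          apply (is_derive_opp (fun y => B y - P y)). apply Dlow. lra.
        - intros z Hz. assert (phi m n x <= phi m n z) by (apply phi_mono; auto; lra).
          assert (0 < B z / z) by (apply BY; lra). nra. }
      rewrite B1, HP1 in H'. lra.
  -
    intros x y Hx Hxy Hy1.
    apply (incr_function B 0 1 (fun y => - B y * phi m n y / y)); simpl; auto.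
    intros z Hz0 Hz1. assert (phi m n z < 0).
    { unfold phi. apply Rmult_lt_reg_r with (2 * (INR n + INR m * z)). nra.
      unfold Rdiv. rewrite Rmult_assoc, Rinv_l by nra. assert (INR m * INR n * (z - 1) < 0).
      { assert (0 < INR m * INR n) by nra. nra. } lra. }
    assert (0 < B z / z) by (apply BY; lra).
    replace (- B z * phi m n z / z) with (B z / z * - phi m n z) by (field; lra). nra.
  -
    intros x y Hx Hxy.
    assert (H : - B x < - B y).
    { apply (incr_function (fun y => - B y) 1 p_infty (fun y => - (- B y * phi m n y / y))); simpl; auto.
      intros z Hz0 _. apply (is_derive_opp B). apply Bd; lra.
      intros z Hz0 _. assert (0 < phi m n z).
      { unfold phi. apply Rdiv_lt_0_compat. assert (0 < INR m * INR n) by nra. nra. nra. }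
      assert (0 < B z / z) by (apply BY; lra).
      replace (- (- B z * phi m n z / z)) with (B z / z * phi m n z) by (field; lra). nra. }
    lra.
Qed.
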